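(* For every integer $\kappa\ge 1$: if there exists a $\frac{\kappa+1}{\kappa}$-APLS for the minimum edge cover problem on graphs of odd-girth at least $2\kappa+1$ with proof size $r$, then there exists a PLS for the minimum edge cover problem on rings with $2\kappa+1$ nodes with proof size $r+O(1)$.
   Context: All graphs are finite, connected and undirected, $G=(V,E)$, $n=|V|$, $N(v)$ is the set of neighbors of $v$; each node distinguishes its incident edges by port numbers. An input assignment $\mathsf{I}:V\to\{0,1\}^*$ and an output assignment $\mathsf{O}:V\to\{0,1\}^*$ give each node a local input and a local output; an IO graph $\langle G,\mathsf I,\mathsf O\rangle$ is a configuration graph with $S(v)=\mathsf I(v)\cdot\mathsf O(v)$. Given a universe $\mathcal U$ of configuration graphs and disjoint families $\mathcal F_Y,\mathcal F_N\subseteq\mathcal U$, a gap proof labeling scheme (GPLS) consists of a prover which, given a configuration graph in $\mathcal F_Y$, assigns a label $L(v)\in\{0,1\}^*$ to every node, and a verifier which at each node $v$ receives only $\langle S(v),L(v),L^N(v)\rangle$, where $L^N(v)$ is the vector of labels of $v$'s neighbors (indexed by port), and outputs True or False; the verifier accepts if all nodes output True and rejects otherwise. The GPLS is correct if (i) for every configuration graph in $\mathcal F_Y$ the verifier accepts under the prover's labels, and (ii) for every configuration graph in $\mathcal F_N$ the verifier rejects under every label assignment. Its proof size is the maximum label length assigned by the prover over configuration graphs in $\mathcal F_Y$. For an optimization problem $\Psi=\langle\Pi,f\rangle$ ($\Pi$ a set of IO graphs = feasible solutions, $f$ integer objective, $OPT_\Psi(G,\mathsf I)$ the optimum over feasible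 $\mathsf O$), and $\alpha\ge1$, an $\alpha$-APLS is a GPLS over $\mathcal U=\{\langle G,\mathsf I,\mathsf O\rangle:\langle G,\mathsf I\rangle\text{ admits a feasible solution}\}$ with $\mathcal F_Y$ the IO graphs in $\Pi$ with $f=OPT_\Psi$, and $\mathcal F_N$ equal to $\mathcal U$ minus the IO graphs in $\Pi$ with $f\le\alpha\cdot OPT_\Psi$ (minimization) resp. $f\ge OPT_\Psi/\alpha$ (maximization). A PLS is a $1$-APLS. Restricting to a graph family means the universe contains only IO graphs whose underlying graph lies in the family. Minimum edge cover: the output assignment encodes a set $C\subseteq E$; it is feasible iff $C$ is an edge cover (every node is incident on an edge of $C$), and $f=|C|$ is minimized. The odd-girth of a graph is the length of its shortest odd cycle. A ring is a cycle graph. *)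

(* Defs.v *)
From mathcomp Require Import all_boot.

Definition bits := seq bool.

(** A port-numbered graph on nodes 'I_n: [pg_port v] lists the neighbours
    of [v] in port order (port i of v leads to [nth _ (pg_port v) i]). *)
Record pgraph := PGraph { pg_n : nat; pg_port : 'I_pg_n -> seq 'I_pg_n }.

Definition node (G : pgraph) := 'I_(pg_n G).
Definition deg (G : pgraph) (v : node G) := size (pg_port G v).
Definition adj (G : pgraph) : rel (node G) := fun u v => v \in pg_port G u.

Definition wf_graph (G : pgraph) : Prop :=
  [/\ 0 < pg_n G,
      (forall v : node G, uniq (pg_port G v)),
      (forall v : node G, ~~ adj G v v),
      (forall u v : node G, adj G u v = adj G v u)
    & (forall u v : node G, connect (adj G) u v)].

Definition iopred := forall G : pgraph, (node G -> bits) -> (node G -> bits) -> Prop.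

(** A verifier sees at v: S(v) = (I(v), O(v)), its own label L(v), and
    the vector of neighbours' labels indexed by port. *)
Definition verifier := bits -> bits -> bits -> seq bits -> bool.
Definition prover_t := forall G : pgraph, (node G -> bits) -> (node G -> bits) -> node G -> bits.

Definition nbr_labels (G : pgraph) (L : node G -> bits) (v : node G) : seq bits :=
  map L (pg_port G v).

Definition accepts (ver : verifier) (G : pgraph) (I O L : node G -> bits) : Prop :=
  forall v : node G, ver (I v) (O v) (L v) (nbr_labels G L v).

Definition is_gpls (FY FN : iopred) (prv : prover_t) (ver : verifier) : Prop :=
  (forall G I O, FY G I O -> accepts ver G I O (prv G I O)) /\
  (forall G I O, FN G I O -> forall L : node G -> bits, ~ accepts ver G I O L).

Definition proof_size_le (FY : iopred) (prv : prover_t) (r : nat) : Prop :=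
  forall G I O, FY G I O -> forall v : node G, size (prv G I O v) <= r.

(** Output encoding of C ⊆ E: O(v) is a bit vector indexed by v's ports,
    bit i = 1 iff the edge at port i is in C; both endpoints must agree. *)
Definition ebit (G : pgraph) (O : node G -> bits) (v u : node G) : bool :=
  nth false (O v) (index u (pg_port G v)).

Definition encodes_edge_set (G : pgraph) (O : node G -> bits) : Prop :=
  (forall v : node G, size (O v) = deg G v) /\
  (forall u v : node G, adj G u v -> ebit G O u v = ebit G O v u).

Definition ec_feasible (G : pgraph) (O : node G -> bits) : Prop :=
  encodes_edge_set G O /\ (forall v : node G, has id (O v)).

(** objective f = |C| (each edge is marked at both endpoints) *)
Definition ec_size (G : pgraph) (O : node G -> bits) : nat :=
  (\sum_(v : node G) count id (O v))./2.

Definition is_OPT_ec (G : pgraph) (k : nat) : Prop :=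
  (exists O : node G -> bits, ec_feasible G O /\ ec_size G O = k) /\
  (forall O : node G -> bits, ec_feasible G O -> k <= ec_size G O).

Definition ec_universe (P : pgraph -> Prop) : iopred :=
  fun G I O => [/\ wf_graph G, P G & exists O', ec_feasible G O'].

Definition ec_FY (P : pgraph -> Prop) : iopred :=
  fun G I O => [/\ ec_universe P G I O, ec_feasible G O & is_OPT_ec G (ec_size G O)].

(** alpha = a / b; minimization: "good" iff feasible and f <= alpha * OPT *)
Definition ec_FN (a b : nat) (P : pgraph -> Prop) : iopred :=
  fun G I O => ec_universe P G I O /\
    ~ (ec_feasible G O /\ exists k, is_OPT_ec G k /\ b * ec_size G O <= a * k).

Definition has_ec_apls (a b : nat) (P : pgraph -> Prop) (r : nat) : Prop :=
  exists (prv : prover_t) (ver : verifier),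
    is_gpls (ec_FY P) (ec_FN a b P) prv ver /\ proof_size_le (ec_FY P) prv r.

Definition odd_girth_ge (k : nat) (G : pgraph) : Prop :=
  forall c : seq (node G), ucycle (adj G) c -> odd (size c) -> k <= size c.

Definition is_ring (m : nat) (G : pgraph) : Prop :=
  pg_n G = m /\
  exists s : seq (node G), [/\ uniq s, size s = m &
    forall u v : node G, adj G v u = (u == next s v) || (u == prev s v)].

(* Main.v *)
Require Import Defs.
From mathcomp Require Import all_boot.
From mathcomp Require Import zify.
Set Implicit Arguments. Unset Strict Implicit.


Lemma count_ebit_sum (T : eqType) (p : seq T) (b : seq bool) :
  uniq p -> size b = size p ->
  count id b = \sum_(u <- p) nth false b (index u p).
Proof.
elim: p b => [|x p IH] [|y b] //=; first by rewrite big_nil.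
move=> /andP[xp up] [sb].
rewrite big_cons eqxx /= (IH b up sb); congr (_ + _).
apply: eq_big_seq => u up'.
by case: eqP => // eux; rewrite eux up' in xp.
Qed.

Lemma count_set_nth_false (b : seq bool) i : i < size b ->
  count id (set_nth false b i false) + nth false b i = count id b.
Proof.
elim: b i => [|y b IH] [|i] //= H.
  by case: y; rewrite ?addn0 // addnC.
by rewrite -addnA IH.
Qed.

Lemma index_eq_mem (T : eqType) (p : seq T) a b : a \in p -> b \in p ->
  (index a p == index b p) = (a == b).
Proof.
move=> ap bp; apply/eqP/eqP => [h|->//].
by rewrite -(nth_index a ap) h nth_index.
Qed.

Lemma nth_map_index (T : eqType) (p : seq T) (f : T -> bool) u : u \in p ->
  nth false (map f p) (index u p) = f u.
Proof.
move=> up; rewrite (nth_map u) ?index_mem // nth_index //.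
Qed.

Definition mk (n : nat) (v : 'I_n) (b : bool) : 'I_(n + n) :=
  unsplit (if b then inr v else inl v).
Definition proj (n : nat) (x : 'I_(n + n)) : 'I_n :=
  match split x with inl v => v | inr v => v end.
Definition side (n : nat) (x : 'I_(n + n)) : bool :=
  if split x is inr _ then true else false.

Lemma proj_mk n (v : 'I_n) b : proj (mk v b) = v.
Proof. by rewrite /proj /mk unsplitK; case: b. Qed.
Lemma side_mk n (v : 'I_n) b : side (mk v b) = b.
Proof. by rewrite /side /mk unsplitK; case: b. Qed.
Lemma mk_proj n (x : 'I_(n + n)) : mk (proj x) (side x) = x.
Proof. by rewrite /mk /proj /side -[RHS]splitK; case: (split x). Qed.
Lemma mk_inj n b : injective (fun v : 'I_n => mk v b).
Proof. by move=> u v /(congr1 (@proj n)); rewrite !proj_mk. Qed.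

Definition liftG (G : pgraph) : pgraph :=
  @PGraph (pg_n G + pg_n G)
    (fun x => map (fun u => mk u (~~ side x)) (pg_port G (proj x))).

Lemma mem_map_mk n (p : seq 'I_n) c (y : 'I_(n + n)) :
  (y \in map (fun u => mk u c) p) = (side y == c) && (proj y \in p).
Proof.
rewrite -{1}(mk_proj y); case: eqP => [<-|ne].
  by rewrite (mem_map (@mk_inj n _)).
apply/mapP => -[u _ /(congr1 (@side n))]; rewrite !side_mk => h; exact: ne.
Qed.

Lemma adj_lift G (x y : node (liftG G)) :
  adj (liftG G) x y = (side y == ~~ side x) && adj G (proj x) (proj y).
Proof. by rewrite /adj /= mem_map_mk. Qed.

Lemma ports_lift G (x : node (liftG G)) :
  pg_port (liftG G) x = map (fun u => mk u (~~ side x)) (pg_port G (proj x)).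
Proof. by []. Qed.

Lemma ebit_liftE G (O2 : node (liftG G) -> bits) (x y : node (liftG G)) :
  side y = ~~ side x ->
  ebit (liftG G) O2 x y = nth false (O2 x) (index (proj y) (pg_port G (proj x))).
Proof.
move=> sy; rewrite /ebit ports_lift -{1}(mk_proj y) sy.
by rewrite (index_map (@mk_inj _ _)).
Qed.

Lemma deg_lift G (x : node (liftG G)) : deg (liftG G) x = deg G (proj x).
Proof. by rewrite /deg ports_lift size_map. Qed.

Lemma nbr_lift G (L : node G -> bits) (x : node (liftG G)) :
  nbr_labels (liftG G) (fun y : node (liftG G) => behead (L (proj y))) x =
  map behead (nbr_labels G L (proj x)).
Proof. by rewrite /nbr_labels ports_lift -!map_comp; apply: eq_map => u /=; rewrite proj_mk. Qed.

Lemma sum_lift n (F : 'I_n -> nat) :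
  \sum_(x < n + n) F (proj x) = \sum_(v < n) F v + \sum_(v < n) F v.
Proof.
rewrite big_split_ord /=; congr (_ + _); apply: eq_bigr => v _;
  [have -> : lshift n v = mk v false by [] | have -> : rshift n v = mk v true by []];
  by rewrite proj_mk.
Qed.


Lemma mem_ring (G : pgraph) (s : seq (node G)) :
  uniq s -> size s = pg_n G -> forall v, v \in s.
Proof.
move=> Hu Hs v.
have : s =i predT.
  apply/subset_cardP; last by apply/subsetP.
  by rewrite (card_uniqP Hu) Hs cardT size_enum_ord.
by move=> ->.
Qed.

Lemma pos_inj (T : eqType) (s : seq T) u w : u \in s -> w \in s ->
  index u s = index w s -> u = w.
Proof. by move=> us ws h; rewrite -(nth_index u us) h nth_index. Qed.

Lemma step_next (T : eqType) (s : seq T) v : uniq s -> v \in s ->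
  index (next s v) s = (index v s).+1 \/
  ((index v s).+1 = size s /\ index (next s v) s = 0).
Proof.
move=> Hu vs; rewrite next_nth vs.
case: s Hu vs => [|y p] // Hu vs.
set i := index v (y :: p).
have hi : i < (size p).+1 by rewrite /i -[(size p).+1]/(size (y :: p)) index_mem.
case: (ltngtP i (size p)) => [lt|gt|e].
- left; rewrite -[nth y p _]/(nth y (y :: p) i.+1).
  by rewrite index_uniq.
- by move: hi; rewrite ltnS leqNgt gt.
- right; rewrite e nth_default //= eqxx; split => //.
Qed.

Definition ringH (G : pgraph) (s : seq (node G)) :=
  [/\ uniq s, size s = pg_n G &
      forall u v : node G, adj G v u = (u == next s v) || (u == prev s v)].

Lemma pos_lt G s (v : node G) : ringH s -> index v s < pg_n G.
Proof. by case=> Hu Hs _; rewrite -[X in _ < X]Hs index_mem (mem_ring Hu Hs). Qed.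

Lemma step_ring G s (v : node G) : ringH s ->
  index (next s v) s = (index v s).+1 \/
  ((index v s).+1 = pg_n G /\ index (next s v) s = 0).
Proof. by case=> Hu Hs _; rewrite -[X in _ = X /\ _]Hs; apply: step_next => //; apply: mem_ring. Qed.

Lemma pos_next_mod G s (v : node G) : ringH s ->
  index (next s v) s = (index v s).+1 %% pg_n G.
Proof.
move=> H; have := pos_lt (next s v) H.
case: (step_ring v H) => [->|[-> ->]] lt; last by rewrite modnn.
by rewrite modn_small.
Qed.

Lemma prev_eq G s (u v : node G) : ringH s -> (u == prev s v) = (v == next s u).
Proof.
case=> Hu _ _; apply/eqP/eqP => [->|->]; first by rewrite next_prev.
by rewrite prev_next.
Qed.

Lemma next_eq G s (u v : node G) : ringH s ->
  (u == next s v) = ((index u s == (index v s).+1) ||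
                     (((index v s).+1 == pg_n G) && (index u s == 0))).
Proof.
move=> H; have [Hu Hs _] := H.
rewrite -(index_eq_mem (mem_ring Hu Hs u) (mem_ring Hu Hs (next s v))).
have := pos_lt v H; have := pos_lt u H; have := pos_lt (next s v) H.
case: (step_ring v H) => [->|[e ->]] l1 l2 l3;
  apply/eqP/idP => [h|/orP[/eqP h|/andP[/eqP h1 /eqP h2]]]; (try apply/orP); lia.
Qed.

Lemma adj_next G s (v : node G) : ringH s -> adj G v (next s v).
Proof. by case=> _ _ ->; rewrite eqxx. Qed.
Lemma adj_prev G s (v : node G) : ringH s -> adj G v (prev s v).
Proof. by case=> _ _ ->; rewrite eqxx orbT. Qed.

Lemma next_neq G s (v : node G) : ringH s -> 2 < pg_n G -> next s v != v.
Proof.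
move=> H Hn; apply/negP; rewrite eq_sym (next_eq _ _ H).
have := pos_lt v H; lia.
Qed.

Lemma next_neq_prev G s (v : node G) : ringH s -> 2 < pg_n G -> next s v != prev s v.
Proof.
move=> H Hn; apply/negP; rewrite (prev_eq _ _ H) => /eqP e.
have h1 := next_eq (next s v) v H; rewrite eqxx in h1.
have h2 := next_eq v (next s v) H; rewrite -e eqxx in h2.
have := pos_lt v H; have := pos_lt (next s v) H.
move: h1 h2 => /esym h1 /esym h2; lia.
Qed.

Lemma ports_perm G s (v : node G) : ringH s -> 2 < pg_n G ->
  uniq (pg_port G v) -> perm_eq (pg_port G v) [:: next s v; prev s v].
Proof.
move=> H Hn up; apply: uniq_perm => //=.
  by rewrite inE andbT next_neq_prev.
by move=> u; rewrite !inE -/(adj G v u); case: H => _ _ ->.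
Qed.

Lemma iter_pos G s (v : node G) j : ringH s ->
  index (iter j (next s) v) s = (index v s + j) %% pg_n G.
Proof.
move=> H; elim: j => [|j IH].
  by rewrite addn0 modn_small // pos_lt.
by rewrite iterS (pos_next_mod _ H) IH -addn1 modnDml -addnA addn1 addnS.
Qed.

Lemma iter_full G s (v : node G) : ringH s -> iter (pg_n G) (next s) v = v.
Proof.
move=> H; have [Hu Hs _] := H.
apply: (pos_inj (mem_ring Hu Hs _) (mem_ring Hu Hs _)).
by rewrite (iter_pos _ _ H) modnDr modn_small // pos_lt.
Qed.

Lemma reach G s (u v : node G) : ringH s ->
  iter ((index u s + pg_n G - index v s) %% pg_n G) (next s) v = u.
Proof.
move=> H; have [Hu Hs _] := H.
apply: (pos_inj (mem_ring Hu Hs _) (mem_ring Hu Hs _)).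
rewrite (iter_pos _ _ H) modnDmr.
have l1 := pos_lt u H; have l2 := pos_lt v H.
have -> : index v s + (index u s + pg_n G - index v s) = index u s + pg_n G by lia.
by rewrite modnDr modn_small.
Qed.

Lemma walk_ring G s (x : node G) p : ringH s -> path (adj G) x p ->
  exists a b w1 w2, index (last x p) s + a + pg_n G * w1 = index x s + b + pg_n G * w2
                    /\ a + b = size p.
Proof.
move=> H; elim: p x => [|y p IH] x /=.
  by move=> _; exists 0, 0, 0, 0.
move=> /andP[axy pyp].
have [a [b [w1 [w2 [e1 e2]]]]] := IH y pyp.
have l1 := pos_lt x H; have l2 := pos_lt y H.
have [Hu Hs Ha] := H.
move: axy; rewrite Ha (prev_eq _ _ H) !(next_eq _ _ H).
case/orP => /orP[/eqP h|/andP[/eqP h1 /eqP h2]].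
- by exists a, b.+1, w1, w2; split; lia.
- by exists a, b.+1, w1.+1, w2; split; lia.
- by exists a.+1, b, w1, w2; split; lia.
- by exists a.+1, b, w1, w2.+1; split; lia.
Qed.

Lemma ring_odd_girth G (s : seq (node G)) : ringH s -> odd_girth_ge (pg_n G) G.
Proof.
move=> H [|x p] //= /andP[cyc _] odd_c.
have [a [b [w1 [w2 [e1 e2]]]]] := walk_ring H cyc.
rewrite last_rcons size_rcons in e1 e2.
rewrite leqNgt; apply/negP => lt.
have e3 : a + pg_n G * w1 = b + pg_n G * w2 by lia.
case: (ltngtP w1 w2) => hw.
- have : pg_n G * w1 + pg_n G <= pg_n G * w2.
    by rewrite addnC -mulnS leq_mul2l hw orbT.
  lia.
- have : pg_n G * w2 + pg_n G <= pg_n G * w1.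
    by rewrite addnC -mulnS leq_mul2l hw orbT.
  lia.
- subst w2; have ab : a = b by lia.
  have : odd (a + b) by rewrite e2.
  by rewrite ab addnn odd_double.
Qed.

Lemma count_ring G (s : seq (node G)) O (v : node G) : ringH s -> 2 < pg_n G ->
  uniq (pg_port G v) -> size (O v) = deg G v ->
  count id (O v) = ebit G O v (next s v) + ebit G O v (prev s v).
Proof.
move=> H Hn up sz.
rewrite (count_ebit_sum up sz) (perm_big _ (ports_perm H Hn up)) !big_cons big_nil.
by rewrite /= addn0.
Qed.

Lemma ring_sum G (s : seq (node G)) O : ringH s -> 2 < pg_n G ->
  (forall v : node G, uniq (pg_port G v)) -> encodes_edge_set G O ->
  \sum_(v : node G) count id (O v) = (\sum_(v : node G) ebit G O v (next s v)).*2.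
Proof.
move=> H Hn up [sz cons].
rewrite (eq_bigr _ (fun v _ => count_ring H Hn (up v) (sz v))) big_split /= -addnn.
congr (_ + _).
transitivity (\sum_(v : node G) (ebit G O (prev s v) v : nat)).
  by apply: eq_bigr => v _; rewrite cons // adj_prev.
have [Hu _ _] := H.
rewrite [RHS](reindex_inj (can_inj (next_prev Hu))) /=.
by apply: eq_bigr => v _; rewrite next_prev.
Qed.

Lemma ring_lower G (s : seq (node G)) O : ringH s -> 2 < pg_n G ->
  (forall v : node G, uniq (pg_port G v)) -> ec_feasible G O ->
  pg_n G <= \sum_(v : node G) count id (O v).
Proof.
move=> H Hn up [enc hid].
rewrite -[X in X <= _]card_ord -sum1_card.
by apply: leq_sum => v _; rewrite -has_count.
Qed.

Lemma lift_walk G (s : seq (node G)) (v : node G) b j : ringH s ->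
  connect (adj (liftG G)) (mk v b) (mk (iter j (next s) v) (b (+) odd j)).
Proof.
move=> H; elim: j => [|j IH]; first by rewrite addbF.
apply: (connect_trans IH); apply: connect1.
by rewrite adj_lift !side_mk !proj_mk iterS oddS addbN eqxx adj_next.
Qed.

Lemma wf_lift G (s : seq (node G)) : ringH s -> wf_graph G -> odd (pg_n G) ->
  wf_graph (liftG G).
Proof.
move=> H [n0 up irr sym con] odd_n; split.
- by rewrite /= addn_gt0 n0.
- by move=> x; rewrite ports_lift (map_inj_uniq (@mk_inj _ _)).
- by move=> x; rewrite adj_lift; case: (side x).
- by move=> x y; rewrite !adj_lift sym; case: (side x); case: (side y).
move=> x y; rewrite -(mk_proj x) -(mk_proj y).
set j0 := (index (proj y) s + pg_n G - index (proj x) s) %% pg_n G.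
case: (boolP (side x (+) odd j0 == side y)) => [/eqP e|ne].
  by have := lift_walk (proj x) (side x) j0 H; rewrite (reach _ _ H) e.
have := lift_walk (proj x) (side x) (j0 + pg_n G) H.
rewrite iterD (iter_full _ H) (reach _ _ H) oddD odd_n.
by move: ne; case: (side x); case: (side y); case: (odd j0).
Qed.

Lemma lift_path G (x : node (liftG G)) p : path (adj (liftG G)) x p ->
  side (last x p) = side x (+) odd (size p).
Proof.
elim: p x => [|y p IH] x /=; first by rewrite addbF.
move=> /andP[axy pyp]; rewrite (IH y pyp).
move: axy; rewrite adj_lift => /andP[/eqP -> _].
by case: (side x); case: (odd (size p)).
Qed.

Lemma lift_odd_girth G k : odd_girth_ge k (liftG G).
Proof.
move=> [|x p] //= /andP[cyc _] odd_c.
have := lift_path cyc; rewrite last_rcons size_rcons.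
move=> /=; case: (side x); case: (odd (size p)) odd_c => //.
Qed.

Definition Ostar G (s : seq (node G)) (x : node (liftG G)) : bits :=
  map (fun u => u == (if side x then prev s (proj x) else next s (proj x)))
      (pg_port G (proj x)).

Lemma ebit_Ostar G (s : seq (node G)) (x y : node (liftG G)) :
  side y = ~~ side x -> proj y \in pg_port G (proj x) ->
  ebit (liftG G) (Ostar s) x y =
  (proj y == (if side x then prev s (proj x) else next s (proj x))).
Proof. by move=> sy m; rewrite ebit_liftE // /Ostar nth_map_index. Qed.

Lemma Ostar_feasible G (s : seq (node G)) : ringH s -> wf_graph G ->
  ec_feasible (liftG G) (Ostar s).
Proof.
move=> H [n0 up irr sym con]; have [Hu _ Ha] := H.
split; first split.
- by move=> x; rewrite deg_lift /Ostar size_map.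
- move=> x y; rewrite adj_lift => /andP[/eqP sy axy].
  have sx : side x = ~~ side y by rewrite sy negbK.
  rewrite !ebit_Ostar //; last by rewrite -/(adj G _ _) sym.
  rewrite sx; case: (side y) => /=.
    by rewrite (prev_eq _ _ H).
  by rewrite (prev_eq _ _ H).
- move=> x; rewrite /Ostar has_map; apply/hasP.
  exists (if side x then prev s (proj x) else next s (proj x)); last by rewrite /= eqxx.
  by case: (side x); rewrite -/(adj G _ _) ?adj_prev ?adj_next.
Qed.

Lemma Ostar_sum G (s : seq (node G)) : ringH s -> wf_graph G ->
  \sum_(x : node (liftG G)) count id (Ostar s x) = pg_n G + pg_n G.
Proof.
move=> H [n0 up irr sym con].
rewrite -[RHS]card_ord -sum1_card; apply: eq_bigr => x _.
rewrite /Ostar count_map -/(count_mem _ _).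
have -> : count (fun u => u == (if side x then prev s (proj x) else next s (proj x)))
           (pg_port G (proj x)) =
          count_mem (if side x then prev s (proj x) else next s (proj x)) (pg_port G (proj x)).
  by apply: eq_count => u.
rewrite count_uniq_mem //.
by case: (side x); rewrite -/(adj G _ _) ?adj_prev ?adj_next.
Qed.

Lemma lift_feasible_back G (O : node G -> bits) :
  ec_feasible (liftG G) (fun x => O (proj x)) -> ec_feasible G O.
Proof.
move=> [[sz cons] hid]; split; first split.
- by move=> v; have := sz (mk v false); rewrite deg_lift !proj_mk.
- move=> u v auv.
  have a2 : adj (liftG G) (mk u false) (mk v true) by rewrite adj_lift !side_mk !proj_mk.
  have := cons _ _ a2; rewrite !ebit_liftE ?side_mk // !proj_mk.
  by [].
- by move=> v; have := hid (mk v false); rewrite proj_mk.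
Qed.

Lemma lift_size G (O : node G -> bits) :
  ec_size (liftG G) (fun x => O (proj x)) = \sum_(v : node G) count id (O v).
Proof.
rewrite /ec_size.
by rewrite (sum_lift (fun v => count id (O v))) addnn doubleK.
Qed.

Lemma count_full (b : seq bool) i : count id b = size b -> i < size b -> nth false b i.
Proof.
move=> h hi; have : all id b by rewrite all_count h.
by move/all_nthP; apply.
Qed.

Definition remove_edge G (O : node G -> bits) (v u : node G) (w : node G) : bits :=
  if w == v then set_nth false (O v) (index u (pg_port G v)) false
  else if w == u then set_nth false (O u) (index v (pg_port G u)) false
  else O w.

Lemma ebit_remove G (O : node G -> bits) v u a b : v != u ->
  b \in pg_port G a -> u \in pg_port G v -> v \in pg_port G u ->
  ebit G (remove_edge O v u) a b =
  ebit G O a b && ~~ ((a == v) && (b == u) || (a == u) && (b == v)).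
Proof.
move=> nvu ba uv vu; rewrite /ebit /remove_edge.
case: (eqVneq a v) ba => [->|nav] ba /=.
  rewrite nth_set_nth /= (index_eq_mem ba uv).
  by case: eqP => [->|_] /=; rewrite ?andbF ?(negbTE nvu) /= ?andbT.
case: (eqVneq a u) ba => [->|nau] ba /=.
  rewrite nth_set_nth /= (index_eq_mem ba vu).
  by case: eqP => [->|_] /=; rewrite ?andbF /= ?andbT.
by rewrite andbT.
Qed.

Lemma sum_eq1 (T : finType) (v : T) : \sum_(w : T) (w == v : nat) = 1.
Proof.
rewrite (bigD1 v) //= eqxx big1 // => w /negbTE ->; by [].
Qed.

Lemma optimal_no_double G (O : node G -> bits) (v u : node G) :
  wf_graph G -> ec_feasible G O ->
  (forall O', ec_feasible G O' -> ec_size G O <= ec_size G O') ->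
  adj G v u -> 2 <= count id (O v) -> count id (O v) = size (O v) ->
  2 <= count id (O u) -> False.
Proof.
move=> [n0 up irr sym con] [[sz cons] hid] opt avu cv fv cu.
have nvu : v != u by apply/eqP => e; move: avu; rewrite e (negbTE (irr u)).
have auv : adj G u v by rewrite sym.
have uv : u \in pg_port G v by [].
have vu : v \in pg_port G u by [].
have iu : index u (pg_port G v) < size (O v) by rewrite sz index_mem.
have iv : index v (pg_port G u) < size (O u) by rewrite sz index_mem.
have bvu : ebit G O v u by apply: count_full.
have buv : ebit G O u v by rewrite -cons.
set O' := remove_edge O v u.
have cnt : forall w, count id (O' w) + (w == v) + (w == u) = count id (O w).
  move=> w; rewrite /O' /remove_edge.
  case: (eqVneq w v) => [->|nwv].
    have := count_set_nth_false iu; rewrite -/(ebit G O v u) bvu => <-.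
    by rewrite ?eqxx ?(negbTE nvu) ?addn0.
  case: (eqVneq w u) => [->|nwu] /=; last by rewrite !addn0.
  have := count_set_nth_false iv; rewrite -/(ebit G O u v) buv => <-.
  by rewrite ?(negbTE nwv) ?eqxx /= ?add0n ?addn0.
have feas : ec_feasible G O'.
  split; first split.
  - move=> w; rewrite /O' /remove_edge.
    case: (eqVneq w v) => [->|_]; first by rewrite size_set_nth -sz; apply/maxn_idPr.
    case: (eqVneq w u) => [->|_]; first by rewrite size_set_nth -sz; apply/maxn_idPr.
    exact: sz.
  - move=> a b aab.
    have aba : adj G b a by rewrite sym.
    rewrite !ebit_remove // cons //.
    by case: (a == v); case: (a == u); case: (b == v); case: (b == u).
  - move=> w; rewrite has_count; have := cnt w.
    case: (eqVneq w v) => [->|nwv]; first by rewrite ?eqxx ?(negbTE nvu) /=; lia.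
    case: (eqVneq w u) => [->|nwu]; first by rewrite ?eqxx ?(negbTE nwv) /=; lia.
    by rewrite /= !addn0 => ->; rewrite -has_count.
have := opt _ feas; rewrite /ec_size.
have -> : \sum_(w : node G) count id (O w) =
          (\sum_(w : node G) count id (O' w)).+2.
  rewrite -(eq_bigr _ (fun w _ => cnt w)) !big_split /=.
  by rewrite !sum_eq1 addn1 addn1.
by rewrite /= ltnn.
Qed.

Definition flag (o : bits) := 1 < count id o.
Definition ver' (ver : verifier) : verifier := fun i o l nb =>
  [&& head false l == flag o,
      (flag o && (count id o == size o)) ==> all (fun l' => ~~ head false l') nb
    & ver i o (behead l) (map behead nb)].
Definition prv' (prv : prover_t) : prover_t := fun G I O v => flag (O v) :: prv G I O v.

Lemma ring_ringH m G : is_ring m G -> pg_n G = m /\ exists s : seq (node G), ringH s.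
Proof.
move=> [e [s [Hu Hs Ha]]]; split => //; exists s; split => //.
by rewrite Hs e.
Qed.

Lemma FY_ring_P k G I O : 1 <= k ->
  ec_FY (is_ring (2 * k).+1) G I O -> ec_FY (odd_girth_ge (2 * k).+1) G I O.
Proof.
move=> hk [[wf ring ex] feas opt]; split => //; split => //.
have [e [s H]] := ring_ringH ring.
by rewrite -e; apply: ring_odd_girth H.
Qed.

Lemma deg_ring G (s : seq (node G)) v : ringH s -> 2 < pg_n G ->
  uniq (pg_port G v) -> deg G v = 2.
Proof. by move=> H Hn up; rewrite /deg (perm_size (ports_perm H Hn up)). Qed.

Theorem lemma5p6 :
  exists c : nat, forall kappa r : nat, 1 <= kappa ->
    has_ec_apls kappa.+1 kappa (odd_girth_ge (2 * kappa).+1) r ->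
    has_ec_apls 1 1 (is_ring (2 * kappa).+1) (r + c).
Proof.
exists 1 => k r hk [prv [ver [[compl sound] psize]]].
exists (prv' prv), (ver' ver); split; last first.
  move=> G I O fy v; rewrite /prv' /= addn1 ltnS.
  exact: psize (FY_ring_P hk fy) v.
split.
- move=> G I O fy v.
  have fyP := FY_ring_P hk fy.
  have [[wf _ _] feas [_ opt]] := fy.
  have := compl G I O fyP v => hv.
  rewrite /ver' /prv' /= eqxx /=; apply/andP; split.
    apply/implyP => /andP[fv /eqP full].
    rewrite /nbr_labels all_map; apply/allP => u uin /=.
    apply/negP => fu.
    exact: (optimal_no_double wf feas opt uin fv full fu).
  rewrite /nbr_labels -map_comp.
  by have -> : map (behead \o (fun u => flag (O u) :: prv G I O u)) (pg_port G v) =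
               map (prv G I O) (pg_port G v) by apply: eq_map.
- move=> G I O [[wf ring _] notgood] L acc.
have [e [s H]] := ring_ringH ring.
have Hn : 2 < pg_n G by rewrite e; lia.
have odd_n : odd (pg_n G) by rewrite e /= mul2n odd_double.
have [n0 up irr sym con] := wf.
set I2 := fun x : node (liftG G) => I (proj x).
set O2 := fun x : node (liftG G) => O (proj x).
set L2 := fun x : node (liftG G) => behead (L (proj x)).
have acc2 : accepts ver (liftG G) I2 O2 L2.
  move=> x; have := acc (proj x); rewrite /ver' => /and3P[_ _ h].
  by rewrite nbr_lift.
apply: (sound (liftG G) I2 O2 _ L2 acc2); split.
  split; [exact: wf_lift H wf odd_n | exact: lift_odd_girth |].
  by exists (Ostar s); apply: Ostar_feasible.
move=> [feas2 [kk [optk hkk]]].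
have feasO := lift_feasible_back feas2.
have size2 : ec_size (liftG G) O2 = \sum_(v : node G) count id (O v) := lift_size O.
have kkle : kk <= pg_n G.
  have := optk.2 _ (Ostar_feasible H wf).
  by rewrite /ec_size Ostar_sum // addnn doubleK.
set X := \sum_(v : node G) (ebit G O v (next s v) : nat).
have SX : \sum_(v : node G) count id (O v) = X.*2 := ring_sum H Hn up feasO.1.
have sizeO : ec_size G O = X by rewrite /ec_size SX doubleK.
have lower : forall O', ec_feasible G O' -> k.+1 <= ec_size G O'.
  move=> O' f'.
  have := ring_lower H Hn up f'; rewrite /ec_size (ring_sum H Hn up f'.1) doubleK.
  lia.
have Xle : X <= k.+1.
  move: hkk; rewrite size2 SX.
  have [k2|k1] := leqP 2 k.
    move: kkle; rewrite e => kkle hkk; nia.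
  have k1' : k = 1 by lia.
  move: kkle; rewrite e k1' => kkle hkk.
  rewrite leqNgt; apply/negP => X3.
  have S6 : \sum_(v : node G) count id (O v) = 6 by rewrite SX; lia.
  have cnt_le : forall v : node G, count id (O v) <= 2.
    move=> v; rewrite -(deg_ring H Hn (up v)) -(feasO.1.1 v); exact: count_size.
  have all2 : forall v : node G, count id (O v) = 2.
    move=> v; apply/eqP; rewrite eqn_leq cnt_le /=; rewrite leqNgt; apply/negP => lt.
    have h : \sum_(i : node G) count id (O i) <= \sum_(i : node G) (2 - (i == v)).
      apply: leq_sum => i _; case: eqVneq => [->|_] /=; first lia.
      by rewrite subn0; apply: cnt_le.
    have h2 : \sum_(i : node G) (2 - (i == v)) + \sum_(i : node G) (i == v : nat) =
              \sum_(i : node G) 2.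
      by rewrite -big_split; apply: eq_bigr => i _; case: (i == v).
    rewrite sum_eq1 sum_nat_const card_ord in h2.
    move: h h2; rewrite S6; lia.
  pose v := Ordinal n0.
  pose u := next s v.
  have fullv : forall w : node G, flag (O w) && (count id (O w) == size (O w)).
    move=> w; rewrite /flag all2 (feasO.1.1 w) (deg_ring H Hn (up w)) eqxx.
    by [].
  have := acc v; rewrite /ver' fullv /= => /and3P[_ hall _].
  move: hall; rewrite /nbr_labels all_map => /allP /(_ u (@adj_next _ _ v H)) /=.
  have := acc u; rewrite /ver' => /and3P[/eqP -> _ _].
  by have := fullv u => /andP[-> _].
apply: notgood; split => //.
exists X; split; last by rewrite !mul1n sizeO.
split; first by exists O.
move=> O' f'; apply: leq_trans Xle (lower O' f').
Qed.
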